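(* For $n\in\mathbb{N}$ and $k\in\mathbb{Z}$ with $k<0$, let $a(n,k)$ be the number of $x\in\mathbb{Z}^n$ with $x_j\le1$ for all $j=1,\dots,n$ and $\sum_{j=1}^nx_j=k$. Then \[ a(n,k)\le a(n)\{|k|+\tfrac32 n\}^{n-1},\qquad a(n)=\frac{\sqrt n}{\alpha(n-1)}\frac{2^{n-1}}{(n-1)!}, \] where $\alpha(m)$ is the volume of the unit ball in $\mathbb{R}^m$ and $\alpha(0)=1$. *)

(* Defs.v *)
From Stdlib Require Import Reals ZArith List Arith.
Open Scope R_scope.

(* Volume of the unit ball in R^m (closed form; alpha(0) = 1):
   m = 2j     : pi^j / j!
   m = 2j + 1 : 2^(2j+1) j! pi^j / (2j+1)!                              *)
Definition ball_vol (m : nat) : R :=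
  let j := Nat.div2 m in
  if Nat.even m then PI ^ j / INR (fact j)
  else 2 ^ m * INR (fact j) * PI ^ j / INR (fact m).

Definition zsum (x : list Z) : Z := fold_right Z.add 0%Z x.

Definition in_S (n : nat) (k : Z) (x : list Z) : Prop :=
  length x = n /\ Forall (fun t => (t <= 1)%Z) x /\ zsum x = k.

(* l is a duplicate-free enumeration of that set; its length is a(n,k). *)
Definition enumerates_S (n : nat) (k : Z) (l : list (list Z)) : Prop :=
  NoDup l /\ forall x, In x l <-> in_S n k x.

Definition a_const (n : nat) : R :=
  sqrt (INR n) / ball_vol (n - 1) * (2 ^ (n - 1) / INR (fact (n - 1))).

(* Main.v *)
Require Import Defs.
From Stdlib Require Import Reals ZArith List Arith Lia Lra.
Open Scope R_scope.

Definition zrange (a : Z) (len : nat) : list Z :=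
  map (fun i => (a + Z.of_nat i)%Z) (seq 0 len).

Fixpoint L (n : nat) (k : Z) : list (list Z) :=
  match n with
  | O => if Z.eqb k 0 then (nil :: nil) else nil
  | S m => flat_map (fun t => map (cons t) (L m (k - t)%Z))
             (zrange (k - Z.of_nat m)%Z (Z.to_nat (2 - (k - Z.of_nat m))%Z))
  end.

Lemma in_zrange a t : In t (zrange a (Z.to_nat (2 - a))) <-> (a <= t <= 1)%Z.
Proof.
  unfold zrange; rewrite in_map_iff; split.
  - intros [i [<- Hi]]. apply in_seq in Hi. lia.
  - intros H. exists (Z.to_nat (t - a)). split; [lia|]. apply in_seq. lia.
Qed.

Lemma sum_le n k x : in_S n k x -> (k <= Z.of_nat n)%Z.
Proof.
  revert n k. induction x as [|t x IH]; intros n k [Hl [Hf Hs]]; simpl in *.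
  - subst; lia.
  - subst n. inversion Hf; subst.
    assert (H := IH (length x) (zsum x) (conj eq_refl (conj H2 eq_refl))). lia.
Qed.

Lemma L_spec n : forall k x, In x (L n k) <-> in_S n k x.
Proof.
  induction n as [|m IH]; intros k x; simpl.
  - destruct x as [|t x]; unfold in_S; simpl.
    + destruct (Z.eqb_spec k 0); simpl; split; intros H.
      * subst; auto.
      * auto.
      * destruct H.
      * destruct H as [_ [_ H]]; lia.
    + split; intros H.
      * destruct (Z.eqb k 0); simpl in H; [destruct H as [H|[]]; discriminate | destruct H].
      * destruct H; discriminate.
  - rewrite in_flat_map. split.
    + intros [t [Ht Hx]]. apply in_zrange in Ht. apply in_map_iff in Hx.
      destruct Hx as [x' [<- Hx']]. apply IH in Hx'. destruct Hx' as [Hl [Hf Hs]].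
      split; [simpl; auto|]. split; [constructor; auto; lia|]. simpl. lia.
    + intros [Hl [Hf Hs]]. destruct x as [|t x']; [discriminate|].
      simpl in Hl. inversion Hf; subst. simpl in *.
      assert (Hin : in_S m (t + zsum x' - t)%Z x').
      { split; [lia|]. split; auto. lia. }
      exists t. split.
      * apply in_zrange. apply sum_le in Hin. lia.
      * apply in_map. apply IH. exact Hin.
Qed.

Lemma NoDup_L n : forall k, NoDup (L n k).
Proof.
  induction n as [|m IH]; intros k; cbn [L].
  - destruct (Z.eqb k 0); repeat constructor; simpl; tauto.
  - assert (Hz : forall a len, NoDup (zrange a len)).
    { intros a len. unfold zrange. apply NoDup_map_NoDup_ForallPairs.
      - intros x y _ _ H; lia.
      - apply seq_NoDup. }
    generalize (Hz (k - Z.of_nat m)%Z (Z.to_nat (2 - (k - Z.of_nat m))%Z)).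
    generalize (zrange (k - Z.of_nat m)%Z (Z.to_nat (2 - (k - Z.of_nat m))%Z)).
    intros l Hl. induction l as [|a l IHl]; simpl; [constructor|].
    inversion Hl; subst. apply NoDup_app.
    + apply NoDup_map_NoDup_ForallPairs; [|apply IH].
      intros x y _ _ H; inversion H; auto.
    + auto.
    + intros x Hx Hx2. apply in_map_iff in Hx. destruct Hx as [x' [<- _]].
      apply in_flat_map in Hx2. destruct Hx2 as [b [Hb Hb2]].
      apply in_map_iff in Hb2. destruct Hb2 as [y [Hy _]]. inversion Hy; subst.
      contradiction.
Qed.

Fixpoint cnt (n s : nat) : nat :=
  match n with
  | O => if Nat.eqb s 0 then 1%nat else 0%nat
  | S m => list_sum (map (cnt m) (seq 0 (S s)))
  end.

Lemma L_len n : forall k, length (L n k) =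
  if Z.leb k (Z.of_nat n) then cnt n (Z.to_nat (Z.of_nat n - k)) else 0%nat.
Proof.
  induction n as [|m IH]; intros k.
  - simpl. destruct (Z.eqb_spec k 0); destruct (Z.leb_spec k 0); subst; simpl; auto; try lia.
    destruct (Nat.eqb_spec (Z.to_nat (- k)) 0); auto; lia.
  - cbn [L]. rewrite length_flat_map. unfold zrange. rewrite map_map.
    rewrite (map_ext_in _ (cnt m)).
    2:{ intros i Hi. apply in_seq in Hi. rewrite length_map, IH.
        destruct (Z.leb_spec (k - (k - Z.of_nat m + Z.of_nat i)) (Z.of_nat m)); [|lia].
        f_equal; lia. }
    destruct (Z.leb_spec k (Z.of_nat (S m))).
    + replace (Z.to_nat (2 - (k - Z.of_nat m))) with (S (Z.to_nat (Z.of_nat (S m) - k))) by lia.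
      reflexivity.
    + replace (Z.to_nat (2 - (k - Z.of_nat m))) with 0%nat by lia. reflexivity.
Qed.
Fixpoint Pn (N s : nat) : nat :=
  match N with O => 1%nat | S M => (Pn M s * (s + S M))%nat end.

Lemma PnA N : forall s, Pn (S N) s = (S s * Pn N (S s))%nat.
Proof.
  induction N as [|N IH]; intros s.
  - simpl. lia.
  - change (Pn (S (S N)) s) with (Pn (S N) s * (s + S (S N)))%nat.
    rewrite IH. simpl Pn. ring.
Qed.

Lemma PnB N s : Pn (S N) (S s) = (Pn (S N) s + S N * Pn N (S s))%nat.
Proof. rewrite (PnA N s). simpl Pn. ring. Qed.

Lemma Pn0 N : Pn N 0 = fact N.
Proof. induction N; simpl Pn; [reflexivity|]. rewrite IHN. simpl fact. lia. Qed.

Lemma Pn_real : forall N s, INR (Pn N s) <= (INR s + (INR N + 1)/2)^N.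
Proof.
  assert (H : forall N, (forall s, INR (Pn N s) <= (INR s + (INR N + 1)/2)^N) /\
                        (forall s, INR (Pn (S N) s) <= (INR s + (INR (S N) + 1)/2)^(S N))).
  { intros N; induction N as [|N [IH1 IH2]].
    - split; intros s.
      + change (Pn 0 s) with 1%nat. simpl pow. simpl INR. lra.
      + change (Pn 1 s) with (1 * (s + 1))%nat. rewrite mult_INR, plus_INR. simpl. lra.
    - split; [exact IH2|]. intros s.
      rewrite PnA. change (Pn (S N) (S s)) with (Pn N (S s) * (S s + S N))%nat.
      rewrite !mult_INR, plus_INR, !S_INR.
      specialize (IH1 (S s)). rewrite S_INR in IH1.
      assert (Hs : 0 <= INR s) by apply pos_INR.
      assert (HN : 0 <= INR N) by apply pos_INR.
      set (Y := INR s + (INR N + 1 + 1 + 1) / 2).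
      assert (HY : INR s + 1 + (INR N + 1) / 2 = Y) by (unfold Y; lra).
      rewrite HY in IH1.
      assert (HP : 0 <= INR (Pn N (S s))) by apply pos_INR.
      assert (HYp : 0 <= Y ^ N) by (apply pow_le; unfold Y; lra).
      change (Y ^ S (S N)) with (Y * (Y * Y ^ N)).
      assert (Hq : (INR s + 1) * (INR s + 1 + (INR N + 1)) <= Y * Y).
      { unfold Y. nra. }
      apply Rle_trans with ((INR s + 1) * (INR s + 1 + (INR N + 1)) * Y ^ N).
      + assert (0 <= (INR s + 1) * (INR s + 1 + (INR N + 1))) by nra. nra.
      + nra. }
  intros N s. apply (proj1 (H N)).
Qed.

Lemma odd_fact j : INR (fact j) * PI ^ j <= INR (fact (2 * j + 1)).
Proof.
  induction j as [|j IH].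
  - simpl. lra.
  - replace (2 * S j + 1)%nat with (S (S (2 * j + 1))) by lia.
    rewrite !fact_simpl, !mult_INR, !S_INR, plus_INR, mult_INR. simpl pow.
    simpl (INR 2).
    assert (Hp := PI_RGT_0). assert (H4 : PI <= 4) by apply PI_4.
    assert (HN : 0 <= INR j) by apply pos_INR.
    assert (Hf : 0 < INR (fact j)) by apply INR_fact_lt_0.
    assert (Hpj : 0 < PI ^ j) by (apply pow_lt; lra).
    assert (Hf2 : 0 < INR (fact (2*j+1))) by apply INR_fact_lt_0.
    set (F := INR (fact (2 * j + 1))) in *.
    apply Rle_trans with ((INR j + 1) * PI * (INR (fact j) * PI ^ j)); [nra|].
    apply Rle_trans with ((INR j + 1) * PI * F); [apply Rmult_le_compat_l; nra|].
    change (INR 1) with 1. assert (Hq : (INR j + 1) * PI <= ((1 + 1) * INR j + 1 + 1 + 1) * ((1 + 1) * INR j + 1 + 1)) by nra. nra.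
Qed.

Lemma ball_vol_bound N : 0 < ball_vol N <= 2 ^ N.
Proof.
  assert (Hp := PI_RGT_0). assert (H4 : PI <= 4) by apply PI_4.
  destruct (Nat.Even_or_Odd N) as [[j ->]|[j ->]]; unfold ball_vol.
  - rewrite Nat.even_even, Nat.div2_double.
    assert (Hf : 1 <= INR (fact j)).
    { assert (H := lt_O_fact j). apply (le_INR 1). lia. }
    assert (Hpj : 0 < PI ^ j) by (apply pow_lt; lra).
    assert (Hpj4 : PI ^ j <= 4 ^ j) by (apply pow_incr; lra).
    rewrite pow_mult. replace (2 ^ 2) with 4 by ring. split.
    + apply Rdiv_lt_0_compat; lra.
    + unfold Rdiv. apply Rle_trans with (PI ^ j * 1).
      * apply Rmult_le_compat_l; [lra|]. rewrite <- Rinv_1. apply Rinv_le_contravar; lra.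
      * lra.
  - rewrite Nat.even_odd, Nat.div2_odd'.
    assert (H := odd_fact j).
    assert (Hf : 0 < INR (fact j)) by apply INR_fact_lt_0.
    assert (Hf2 : 0 < INR (fact (2*j+1))) by apply INR_fact_lt_0.
    assert (Hpj : 0 < PI ^ j) by (apply pow_lt; lra).
    assert (H2 : 0 < 2 ^ (2*j+1)) by (apply pow_lt; lra).
    split.
    + apply Rdiv_lt_0_compat; [|lra]. apply Rmult_lt_0_compat; [|lra]. nra.
    + apply Rmult_le_reg_r with (INR (fact (2*j+1))); [lra|].
      unfold Rdiv. rewrite Rmult_assoc, Rinv_l by lra. nra.
Qed.

Lemma cnt0 s : list_sum (map (cnt 0) (seq 0 (S s))) = 1%nat.
Proof.
  induction s as [|s IH]; [reflexivity|].
  rewrite seq_S, map_app, list_sum_app, IH. simpl. reflexivity.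
Qed.

Lemma cnt_P M : forall s, (cnt (S M) s * fact M)%nat = Pn M s.
Proof.
  induction M as [|M IH]; intros s.
  - change (cnt 1 s) with (list_sum (map (cnt 0) (seq 0 (S s)))). rewrite cnt0. reflexivity.
  - change (cnt (S (S M)) s) with (list_sum (map (cnt (S M)) (seq 0 (S s)))).
    induction s as [|s IHs].
    + change (list_sum (map (cnt (S M)) (seq 0 1))) with (cnt (S M) 0 + 0)%nat.
      rewrite Nat.add_0_r, fact_simpl. change (Pn (S M) 0) with (Pn M 0 * (0 + S M))%nat. rewrite <- IH. ring.
    + rewrite seq_S, map_app, list_sum_app. change (list_sum (map (cnt (S M)) ((0 + S s)%nat :: nil))) with (cnt (S M) (S s) + 0)%nat.
      rewrite Nat.add_0_r, Nat.mul_add_distr_r, IHs, PnB, <- IH, fact_simpl. ring.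
Qed.

Theorem lemma5p1 (n : nat) (k : Z) (hn : (1 <= n)%nat) (hk : (k < 0)%Z) :
  (exists l, enumerates_S n k l) /\
  (forall l, enumerates_S n k l ->
     INR (length l) <= a_const n * (IZR (Z.abs k) + 3 / 2 * INR n) ^ (n - 1)).
Proof.
  split.
  - exists (L n k). split; [apply NoDup_L | intros x; apply L_spec].
  - intros l [Hnd Hl].
    assert (Hlen : length l = length (L n k)).
    { apply Nat.le_antisymm; apply NoDup_incl_length; auto; try apply NoDup_L;
        intros x Hx; [apply L_spec, Hl | apply Hl, L_spec]; auto. }
    rewrite Hlen, L_len.
    destruct n as [|N]; [lia|].
    destruct (Z.leb_spec k (Z.of_nat (S N))); [|lia].
    set (s := Z.to_nat (Z.of_nat (S N) - k)).
    assert (HX : IZR (Z.abs k) + 3 / 2 * INR (S N) = INR s + (INR N + 1) / 2).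
    { assert (Hs : Z.of_nat s = (Z.of_nat N + 1 - k)%Z) by (unfold s; lia).
      assert (Hk : Z.abs k = (- k)%Z) by lia.
      rewrite Hk, opp_IZR, (INR_IZR_INZ s), Hs, minus_IZR, plus_IZR, <- INR_IZR_INZ, S_INR. lra. }
    rewrite HX. replace (S N - 1)%nat with N by lia.
    assert (HP := Pn_real N s). rewrite <- (cnt_P N s), mult_INR in HP.
    assert (Hf : 0 < INR (fact N)) by apply INR_fact_lt_0.
    destruct (ball_vol_bound N) as [Hb1 Hb2].
    assert (Hsq : 1 <= sqrt (INR (S N))).
    { rewrite <- sqrt_1. apply sqrt_le_1_alt. rewrite S_INR. assert (0 <= INR N) by apply pos_INR. lra. }
    assert (Ha : 1 / INR (fact N) <= a_const (S N)).
    { unfold a_const. replace (S N - 1)%nat with N by lia.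
      assert (H2 : 0 < 2 ^ N) by (apply pow_lt; lra).
      assert (1 <= sqrt (INR (S N)) / ball_vol N * 2 ^ N).
      { apply Rle_trans with (1 / ball_vol N * 2 ^ N).
        - unfold Rdiv. rewrite Rmult_1_l. apply Rmult_le_reg_l with (ball_vol N); [lra|].
          rewrite <- Rmult_assoc, Rinv_r by lra. lra.
        - apply Rmult_le_compat_r; [lra|]. unfold Rdiv. apply Rmult_le_compat_r; [|lra].
          left. apply Rinv_0_lt_compat. lra. }
      unfold Rdiv in *. rewrite <- Rmult_assoc.
      apply Rmult_le_compat_r; [left; apply Rinv_0_lt_compat; lra | lra]. }
    set (X := (INR s + (INR N + 1) / 2) ^ N) in *.
    assert (HX0 : 0 <= X) by (unfold X; apply pow_le; apply Rplus_le_le_0_compat; [apply pos_INR|]; assert (0 <= INR N) by apply pos_INR; lra).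
    apply Rle_trans with (1 / INR (fact N) * X).
    + apply Rmult_le_reg_r with (INR (fact N)); [lra|].
      replace (1 / INR (fact N) * X * INR (fact N)) with X by (field; lra). exact HP.
    + apply Rmult_le_compat_r; assumption.
Qed.
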